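(* Assume the standing setting below. Let $\alpha\in(0,1/6]$ with $\alpha n$ an integer, let $P_1,P_2\subseteq X$ be disjoint with $|P_1|=|P_2|=\alpha n$, and let $T\subseteq X$ be nonempty. Let $F_c:=\mathrm{far}_{4(k+1)\phi_\alpha}(X\setminus P_1,T)$ and let $\mathcal{B}_c=(\mathcal{B}_c(1),\ldots,\mathcal{B}_c(L))$ be a $(\phi_\alpha/3)$-linear bin division of $(X\setminus P_1)\setminus F_c$ with respect to $T$. If $\mathcal{B}_c$ is well-represented in $P_2$ for $X\setminus P_1$, then for all $i\in[L-1]$, $$R(\mathcal{B}_c(i)\cap P_2,T)\ge\frac\alpha3\,R(\mathcal{B}_c(i+1),T).$$
   Context: Standing setting: $(X,\rho)$ is a finite metric space with $|X|=n$; $k\ge2$ is an integer and $\delta\in(0,1)$; $\log$ is the natural logarithm; for $\alpha>0$, $\phi_\alpha:=150\log(32k/\delta)/\alpha$. For nonempty $T\subseteq X$, $\rho(x,T):=\min_{y\in T}\rho(x,y)$ and $R(S,T):=\sum_{x\in S}\rho(x,T)$; ties are broken by a fixed ordering of $X$. For $S\subseteq X$ and real $r\ge0$, $\mathrm{far}_r(S,T)$ is the set of the $\lceil r\rceil$ points of $S$ furthest from $T$; if $|S|<r$, $\mathrm{far}_r(S,T):=S$ (trivial far set). For finite $W$, $A,B\subseteq W$, $B$ is well-represented in $A$ for $W$ if $|B\cap A|/|B|\in[r/2,\frac32 r]$ with $r=|A|/|W|$; a bin division is well-represented if all its bins are. A $z$-linear bin division ($z>0$) of $W$ with respect to $T$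 is a partition $(\mathcal{B}(1),\ldots,\mathcal{B}(L))$ of $W$ with: (1) if $z\le|W|$, $|\mathcal{B}(i)|\ge z(i+1)/2$ for all $i$; otherwise it is trivial, $\mathcal{B}(1):=W$; (2) $|\mathcal{B}(1)|\le\frac52 z$; (3) $|\mathcal{B}(i+1)|/|\mathcal{B}(i)|\le3/2$; (4) $\rho(x,T)\ge\rho(x',T)$ whenever $x\in\mathcal{B}(i)$, $x'\in\mathcal{B}(i+1)$. *)

(* Defs.v *)
From HB Require Import structures.
From mathcomp Require Import all_boot all_order all_algebra.
From mathcomp Require Import reals exp.
Set Implicit Arguments. Unset Strict Implicit. Unset Printing Implicit Defensive.
Import Order.TTheory GRing.Theory Num.Theory.
Local Open Scope ring_scope.

Section Defs.
Variables (R : realType) (X : finType) (rho : X -> X -> R).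

Definition is_metric : Prop :=
  [/\ forall x y, 0 <= rho x y,
      forall x y, rho x y = 0 <-> x = y,
      forall x y, rho x y = rho y x &
      forall x y z, rho x z <= rho x y + rho y z].

(* rho(x,T) = min_{y in T} rho(x,y)  (meaningful for nonempty T) *)
Definition distT (x : X) (T : {set X}) : R :=
  if [pick y in T] is Some y0 then \big[Num.min/rho x y0]_(y in T) rho x y
  else 0.

Definition costR (S T : {set X}) : R := \sum_(x in S) distT x T.

Definition phi (k : nat) (delta alpha : R) : R :=
  150 * ln (32 * k%:R / delta) / alpha.

(* "y comes before x" in the order: further from T first, ties broken by the
   fixed ordering of X (its enumeration rank). *)
Definition before (T : {set X}) (y x : X) : bool :=
  (distT x T < distT y T) ||
  ((distT y T == distT x T) && (enum_rank y < enum_rank x)%N).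

(* far_r(S,T): the ceil(r) points of S furthest from T; S itself if |S| < r *)
Definition far (r : R) (S T : {set X}) : {set X} :=
  if #|S|%:R < r then S
  else [set x in S | (#|[set y in S | before T y x]|%:Z < Num.ceil r)%R].

Definition well_rep (W A B : {set X}) : Prop :=
  let r := #|A|%:R / #|W|%:R : R in
  r / 2 <= #|B :&: A|%:R / #|B|%:R <= 3 / 2 * r.

Definition bin_div_well_rep (W A : {set X}) (L : nat) (B : nat -> {set X}) : Prop :=
  forall i, (1 <= i <= L)%N -> well_rep W A (B i).

Definition linear_bin_division (z : R) (W T : {set X}) (L : nat)
    (B : nat -> {set X}) : Prop :=
  [/\
      ((forall i j, (1 <= i <= L)%N -> (1 <= j <= L)%N -> i != j ->
         [disjoint B i & B j]) /\
      \bigcup_(1 <= i < L.+1) B i = W),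
      (if z <= #|W|%:R then
         forall i, (1 <= i <= L)%N -> z * (i.+1)%:R / 2 <= #|B i|%:R
       else L = 1%N /\ B 1%N = W),
      #|B 1%N|%:R <= 5 / 2 * z,
      (forall i, (1 <= i < L)%N -> #|B i.+1|%:R / #|B i|%:R <= 3 / 2 :> R) &
      (forall i x x', (1 <= i < L)%N -> x \in B i -> x' \in B i.+1 ->
         distT x' T <= distT x T)].

End Defs.

(* Main.v *)
Require Import Defs.
From HB Require Import structures.
From mathcomp Require Import all_boot all_order all_algebra.
From mathcomp Require Import reals exp.
From mathcomp Require Import lra.
Import Order.TTheory GRing.Theory Num.Theory.
Local Open Scope ring_scope.

Lemma distT_ge0 (R : realType) (X : finType) (rho : X -> X -> R)
  (hrho : is_metric rho) x T : 0 <= distT rho x T.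
Proof.
case: hrho => h0 _ _ _; rewrite /distT; case: pickP => [y0 _|_] //.
apply: (big_ind (fun v => 0 <= v)) => //.
by move=> a b ha hb; rewrite le_min ha hb.
Qed.

Theorem lemma15 (R : realType) (X : finType) (rho : X -> X -> R)
  (hrho : is_metric rho) (k : nat) (delta : R) (alpha : R)
  (hk : (2 <= k)%N) (hdelta : 0 < delta < 1)
  (halpha : 0 < alpha <= 1 / 6)
  (halphan : exists m : nat, alpha * #|X|%:R = m%:R)
  (P1 P2 T : {set X})
  (hdisj : [disjoint P1 & P2])
  (hP1 : #|P1|%:R = alpha * #|X|%:R) (hP2 : #|P2|%:R = alpha * #|X|%:R)
  (hT : T != set0)
  (L : nat) (B : nat -> {set X}) :
  let Fc := far rho (4 * (k.+1)%:R * phi k delta alpha) (~: P1) T in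
  linear_bin_division rho (phi k delta alpha / 3) ((~: P1) :\: Fc) T L B ->
  bin_div_well_rep R (~: P1) P2 L B ->
  forall i, (1 <= i < L)%N ->
    alpha / 3 * costR rho (B i.+1) T <= costR rho (B i :&: P2) T.
Proof.
move=> Fc [_ _ _ H3 H4] Hwr i Hi.
have Hi' : (1 <= i <= L)%N by case/andP: Hi => -> /ltnW ->.
have Hwi := Hwr i Hi'; have H3i := H3 i Hi.
rewrite /well_rep in Hwi.
have sP2 : P2 \subset ~: P1 by apply/subsetP => x hx; rewrite inE; apply/negP => hx1; by move/pred0P: hdisj => /(_ x) /=; rewrite hx1 hx.
have hX0 : (0 < #|X|)%N.
  by case/set0Pn: hT => t _; apply/card_gt0P; exists t.
have hXR : (0 : R) < #|X|%:R by rewrite ltr0n.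
have hP2pos : (0 : R) < #|P2|%:R by rewrite hP2 mulr_gt0 //; case/andP: halpha.
have hWle : (#|~: P1| <= #|X|)%N by exact: max_card.
have hP2W : (#|P2| <= #|~: P1|)%N by exact: subset_leq_card.
have hWpos : (0 : R) < #|~: P1|%:R.
  by apply: (lt_le_trans hP2pos); rewrite ler_nat.
set w := #|~: P1|%:R in Hwi hWpos.
set p := #|P2|%:R in Hwi hP2pos.
have hq : alpha <= p / w.
  rewrite ler_pdivlMr // /p hP2 ler_pM2l; last by case/andP: halpha.
  by rewrite ler_nat.
set q := p / w in Hwi hq.
set b := #|B i|%:R in Hwi H3i.
set b1 := #|B i.+1|%:R in H3i.
set c := #|B i :&: P2|%:R in Hwi.
have hb : 0 < b.
  rewrite lt_def ler0n andbT; apply/negP => /eqP hb0.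
  move: Hwi; rewrite hb0 invr0 mulr0 => /andP [h _].
  have : 0 < q / 2 by rewrite divr_gt0 // divr_gt0.
  by rewrite ltNge h.
have hb1 : b1 <= 3 / 2 * b by rewrite -ler_pdivrMr.
have hc : q / 2 * b <= c.
  by case/andP: Hwi => h _; rewrite -ler_pdivlMr.
set e := \big[Num.max/0]_(x in B i.+1) distT rho x T.
have he0 : 0 <= e.
  apply: (big_ind (fun v => 0 <= v)) => //; first by move=> a a2 ha ha2; rewrite le_max ha.
  by move=> x _; exact: distT_ge0.
have hup : costR rho (B i.+1) T <= b1 * e.
  rewrite /costR /b1 mulr_natl -sumr_const; apply: ler_sum => x hx.
  by rewrite /e (bigD1 x) //= le_max lexx.
have hlow : c * e <= costR rho (B i :&: P2) T.
  rewrite /costR /c mulr_natl -sumr_const; apply: ler_sum => x.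
  rewrite inE => /andP [hx _].
  apply: (big_ind (fun v => v <= distT rho x T)).
  - exact: distT_ge0.
  - by move=> a a2 ha ha2; rewrite ge_max ha.
  - by move=> y hy; apply: (H4 i x y Hi).
have ha := halpha; case/andP: ha => ha0 ha6.
apply: (le_trans _ hlow).
apply: (@le_trans _ _ (alpha / 3 * (b1 * e))).
  by rewrite ler_wpM2l // divr_ge0 // ltW.
have : alpha / 3 * b1 <= c.
  have hq0 : 0 < q by apply: lt_le_trans hq.
  nra.
nra.
Qed.
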